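(* Let $(X,d)$ be a metric space and $o\in X$ a point. If $X$ admits a conical bicombing $\phi$, then the metric space $(\mathrm{CBI}(X),D_o)$ admits a conical bicombing $\Phi$ such that the subset $\mathrm{RCBI}(X)\subset\mathrm{CBI}(X)$ of all reversible conical bicombings on $X$ is $\Phi$-convex.
   Context: A bicombing on a metric space $(Y,d)$ is a map $\sigma\colon Y\times Y\times[0,1]\to Y$ such that each $\sigma_{xy}:=\sigma(x,y,\cdot)$ is a geodesic from $x$ to $y$ ($\sigma_{xy}(0)=x$, $\sigma_{xy}(1)=y$, $d(\sigma_{xy}(s),\sigma_{xy}(t))=|s-t|d(x,y)$); it is conical if $d(\sigma_{xy}(t),\sigma_{x'y'}(t))\le(1-t)d(x,x')+t\,d(y,y')$ for all $x,y,x',y'$, $t\in[0,1]$, and reversible if $\sigma_{xy}(t)=\sigma_{yx}(1-t)$. $\mathrm{CBI}(X)$ is the set of all conical bicombings on $X$, with metric $D_o(\sigma,\tau):=\sup\{3^{-k}d(\sigma_{xy}(t),\tau_{xy}(t)) : k\ge 0,\ x,y\in B_{2^k}(o),\ t\in[0,1]\}$, where $B_r(o)$ is the ball of radius $r$ about $o$. A subset $A$ of $\mathrm{CBI}(X)$ is $\Phi$-convex if $\Phi(\sigma,\tau,t)\in A$ for all $\sigma,\tau\in A$, $t\in[0,1]$. *)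

(* Defs.v *)
From Stdlib Require Import Reals.
From Coquelicot Require Import Coquelicot.
Open Scope R_scope.

Definition is_metric {Y : Type} (d : Y -> Y -> R) : Prop :=
  (forall x y, 0 <= d x y) /\
  (forall x y, d x y = 0 <-> x = y) /\
  (forall x y, d x y = d y x) /\
  (forall x y z, d x z <= d x y + d y z).

(** A bicombing: sigma x y is a (linearly reparametrised) geodesic from x to y
    on [0,1]; values of the parameter outside [0,1] are irrelevant. *)
Definition is_bicombing {Y : Type} (d : Y -> Y -> R) (sigma : Y -> Y -> R -> Y) : Prop :=
  forall x y,
    sigma x y 0 = x /\ sigma x y 1 = y /\
    (forall s t, 0 <= s <= 1 -> 0 <= t <= 1 ->
       d (sigma x y s) (sigma x y t) = Rabs (s - t) * d x y).

Definition is_conical {Y : Type} (d : Y -> Y -> R) (sigma : Y -> Y -> R -> Y) : Prop :=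
  forall x y x' y' t, 0 <= t <= 1 ->
    d (sigma x y t) (sigma x' y' t) <= (1 - t) * d x x' + t * d y y'.

Definition conical_bicombing {Y : Type} (d : Y -> Y -> R) (sigma : Y -> Y -> R -> Y) : Prop :=
  is_bicombing d sigma /\ is_conical d sigma.

Definition reversible {Y : Type} (sigma : Y -> Y -> R -> Y) : Prop :=
  forall x y t, 0 <= t <= 1 -> sigma x y t = sigma y x (1 - t).

Definition CBI {X : Type} (d : X -> X -> R) : Type :=
  { sigma : X -> X -> R -> X | conical_bicombing d sigma }.

Definition D_set {X : Type} (d : X -> X -> R) (o : X)
  (sigma tau : X -> X -> R -> X) (r : R) : Prop :=
  exists (k : nat) (x y : X) (t : R),
    d o x <= 2 ^ k /\ d o y <= 2 ^ k /\ 0 <= t <= 1 /\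
    r = / (3 ^ k) * d (sigma x y t) (tau x y t).

(** D_o(sigma,tau) := sup of D_set (the set is nonempty and bounded above,
    so the supremum is a finite real). *)
Definition D_o {X : Type} (d : X -> X -> R) (o : X) (sigma tau : CBI d) : R :=
  real (Lub_Rbar (D_set d o (proj1_sig sigma) (proj1_sig tau))).

Definition RCBI {X : Type} (d : X -> X -> R) (sigma : CBI d) : Prop :=
  reversible (proj1_sig sigma).

Definition Phi_convex {Y : Type} (Phi : Y -> Y -> R -> Y) (A : Y -> Prop) : Prop :=
  forall s t u, A s -> A t -> 0 <= u <= 1 -> A (Phi s t u).

(* Main.v *)
Require Import Defs.
From Stdlib Require Import Reals Lra.
From Coquelicot Require Import Coquelicot.
From Stdlib Require Import FunctionalExtensionality ProofIrrelevance.
Open Scope R_scope.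

Definition clamp (u : R) : R := Rmax 0 (Rmin 1 u).

Lemma clamp_in u : 0 <= clamp u <= 1.
Proof. unfold clamp, Rmax, Rmin; repeat destruct Rle_dec; lra. Qed.

Lemma clamp_id u : 0 <= u <= 1 -> clamp u = u.
Proof. intros H; unfold clamp, Rmax, Rmin; repeat destruct Rle_dec; lra. Qed.

Lemma geod_trick (X : Type) (d : X -> X -> R) (Hd : is_metric d) (f : R -> X) (D : R) :
  (forall s t, 0 <= s <= 1 -> 0 <= t <= 1 -> d (f s) (f t) <= Rabs (s - t) * D) ->
  d (f 0) (f 1) = D ->
  forall s t, 0 <= s <= 1 -> 0 <= t <= 1 -> d (f s) (f t) = Rabs (s - t) * D.
Proof.
  intros Hle HD.
  destruct Hd as [Hpos [Hzero [Hsym Htri]]].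
  assert (Hmain : forall s t, 0 <= s <= 1 -> 0 <= t <= 1 -> s <= t ->
                  d (f s) (f t) = Rabs (s - t) * D).
  { intros s t Hs Ht Hst.
    rewrite Rabs_left1 by lra.
    pose proof (Hle 0 s ltac:(lra) Hs) as H1.
    pose proof (Hle t 1 Ht ltac:(lra)) as H2.
    pose proof (Hle s t Hs Ht) as H3.
    rewrite Rabs_left1 in H1 by lra. rewrite Rabs_left1 in H2 by lra.
    rewrite Rabs_left1 in H3 by lra.
    pose proof (Htri (f 0) (f s) (f 1)) as T1.
    pose proof (Htri (f s) (f t) (f 1)) as T2.
    lra. }
  intros s t Hs Ht.
  destruct (Rle_dec s t) as [h|h].
  - apply Hmain; auto.
  - rewrite Hsym, Rabs_minus_sym. apply Hmain; auto; lra.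
Qed.

Lemma phi_diag (X : Type) (d : X -> X -> R) (Hd : is_metric d) phi :
  conical_bicombing d phi -> forall x t, 0 <= t <= 1 -> phi x x t = x.
Proof.
  intros [Hb _] x t Ht.
  destruct (Hb x x) as [H0 [_ Hdist]].
  destruct Hd as [_ [Hzero _]].
  assert (E : d (phi x x t) (phi x x 0) = 0).
  { rewrite Hdist by lra. destruct (Hzero x x) as [_ Hz]. rewrite Hz; auto. ring. }
  apply Hzero in E. rewrite E. exact H0.
Qed.

Lemma psi_cb (X : Type) (d : X -> X -> R) (Hd : is_metric d) phi
  (Hphi : conical_bicombing d phi) (sg tau : X -> X -> R -> X)
  (Hs : conical_bicombing d sg) (Ht : conical_bicombing d tau) (u : R) (Hu : 0 <= u <= 1) :
  conical_bicombing d (fun x y s => phi (sg x y s) (tau x y s) u).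
Proof.
  pose proof Hphi as [Hpb Hpc].
  destruct Hs as [Hsb Hsc]. destruct Ht as [Htb Htc].
  split.
  - intros x y.
    destruct (Hsb x y) as [S0 [S1 Sd]]. destruct (Htb x y) as [T0 [T1 Td]].
    assert (E0 : phi (sg x y 0) (tau x y 0) u = x).
    { rewrite S0, T0. apply (phi_diag X d Hd phi Hphi); auto. }
    assert (E1 : phi (sg x y 1) (tau x y 1) u = y).
    { rewrite S1, T1. apply (phi_diag X d Hd phi Hphi); auto. }
    split; [exact E0|]. split; [exact E1|].
    intros s t Hs' Ht'.
    apply (geod_trick X d Hd (fun s => phi (sg x y s) (tau x y s) u) (d x y)).
    + intros a b Ha Hb.
      eapply Rle_trans. apply Hpc; auto.
      rewrite Sd, Td by auto.
      assert (0 <= Rabs (a - b) * d x y).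
      { apply Rmult_le_pos. apply Rabs_pos. apply Hd. }
      nra.
    + simpl. rewrite E0, E1. reflexivity.
    + auto.
    + auto.
  - intros x y x' y' t Htt.
    eapply Rle_trans. apply Hpc; auto.
    pose proof (Hsc x y x' y' t Htt). pose proof (Htc x y x' y' t Htt).
    nra.
Qed.

Definition PhiDef (X : Type) (d : X -> X -> R) (Hd : is_metric d) phi
  (Hphi : conical_bicombing d phi) (sg tau : CBI d) (u : R) : CBI d :=
  exist (conical_bicombing d)
    (fun x y s => phi (proj1_sig sg x y s) (proj1_sig tau x y s) (clamp u))
    (psi_cb X d Hd phi Hphi (proj1_sig sg) (proj1_sig tau) (proj2_sig sg) (proj2_sig tau)
       (clamp u) (clamp_in u)).

Lemma cbi_eq (X : Type) (d : X -> X -> R) (a b : CBI d) : proj1_sig a = proj1_sig b -> a = b.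
Proof.
  destruct a as [a Ha], b as [b Hb]; simpl; intros ->.
  f_equal. apply proof_irrelevance.
Qed.

Lemma lub_ub (E : R -> Prop) r0 M : E r0 -> (forall r, E r -> r <= M) ->
  forall r, E r -> r <= real (Lub_Rbar E).
Proof.
  intros H0 HM r Hr.
  destruct (Lub_Rbar_correct E) as [Hub Hl].
  destruct (Lub_Rbar E) as [l| |] eqn:Heq.
  - exact (Hub r Hr).
  - exfalso. apply (Hl (Finite M)). intros x Hx. exact (HM x Hx).
  - exfalso. exact (Hub r0 H0).
Qed.

Lemma lub_least (E : R -> Prop) r0 M : E r0 -> (forall r, E r -> r <= M) ->
  forall B, (forall r, E r -> r <= B) -> real (Lub_Rbar E) <= B.
Proof.
  intros H0 HM B HB.
  destruct (Lub_Rbar_correct E) as [Hub Hl].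
  destruct (Lub_Rbar E) as [l| |] eqn:Heq.
  - apply (Hl (Finite B)). intros x Hx. exact (HB x Hx).
  - exfalso. apply (Hl (Finite M)). intros x Hx. exact (HM x Hx).
  - exfalso. exact (Hub r0 H0).
Qed.

Lemma Dset_props (X : Type) (d : X -> X -> R) (Hd : is_metric d) (o : X)
  (sg tau : X -> X -> R -> X) :
  conical_bicombing d sg -> conical_bicombing d tau ->
  D_set d o sg tau 0 /\ (forall r, D_set d o sg tau r -> 0 <= r <= 4).
Proof.
  intros [Hsb _] [Htb _].
  destruct Hd as [Hpos [Hzero [Hsym Htri]]].
  split.
  - exists 0%nat, o, o, 0. simpl. destruct (Hzero o o) as [_ Hz]. rewrite Hz by auto.
    destruct (Hsb o o) as [S0 _]. destruct (Htb o o) as [T0 _].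
    rewrite S0, T0, Hz by auto. repeat split; lra.
  - intros r [k [x [y [t [Hx [Hy [Htt Hr]]]]]]].
    subst r.
    assert (Hp : 0 < 3 ^ k) by (apply pow_lt; lra).
    assert (H23 : 2 ^ k <= 3 ^ k) by (apply pow_incr; lra).
    destruct (Hsb x y) as [S0 [_ Sd]]. destruct (Htb x y) as [T0 [_ Td]].
    assert (A1 : d (sg x y t) x <= d x y).
    { rewrite <- S0 at 2. rewrite Sd by lra. rewrite Rabs_pos_eq by lra.
      pose proof (Hpos x y). nra. }
    assert (A2 : d x (tau x y t) <= d x y).
    { rewrite <- T0 at 1. rewrite Td by lra. rewrite Rabs_left1 by lra.
      pose proof (Hpos x y). nra. }
    pose proof (Htri (sg x y t) x (tau x y t)).
    pose proof (Htri x o y). rewrite (Hsym x o) in *.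
    assert (B : d (sg x y t) (tau x y t) <= 4 * 3 ^ k) by lra.
    pose proof (Hpos (sg x y t) (tau x y t)).
    split.
    + apply Rmult_le_pos; [apply Rlt_le, Rinv_0_lt_compat; auto | auto].
    + apply Rle_trans with (/ 3 ^ k * (4 * 3 ^ k)).
      * apply Rmult_le_compat_l; [apply Rlt_le, Rinv_0_lt_compat; auto | auto].
      * right. field. lra.
Qed.

Theorem lemma4p2 (X : Type) (d : X -> X -> R) (o : X)
  (Hd : is_metric d)
  (phi : X -> X -> R -> X) (Hphi : conical_bicombing d phi) :
  exists Phi : CBI d -> CBI d -> R -> CBI d,
    conical_bicombing (D_o d o) Phi /\ Phi_convex Phi (RCBI d).
Proof.
  exists (PhiDef X d Hd phi Hphi).
  pose proof Hphi as [Hpb Hpc].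
  split; [split|].
  - intros sg tau.
    split; [|split].
    + apply cbi_eq. simpl. rewrite clamp_id by lra.
      apply functional_extensionality; intro x.
      apply functional_extensionality; intro y.
      apply functional_extensionality; intro s.
      destruct (Hpb (proj1_sig sg x y s) (proj1_sig tau x y s)) as [H0 _]. exact H0.
    + apply cbi_eq. simpl. rewrite clamp_id by lra.
      apply functional_extensionality; intro x.
      apply functional_extensionality; intro y.
      apply functional_extensionality; intro s.
      destruct (Hpb (proj1_sig sg x y s) (proj1_sig tau x y s)) as [_ [H1 _]]. exact H1.
    + intros a b Ha Hb.
      unfold D_o.
      destruct (Dset_props X d Hd o _ _ (proj2_sig sg) (proj2_sig tau)) as [E0 EB].
      destruct (Dset_props X d Hd o _ _ (proj2_sig (PhiDef X d Hd phi Hphi sg tau a))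
                  (proj2_sig (PhiDef X d Hd phi Hphi sg tau b))) as [F0 FB].
      simpl in *. rewrite !clamp_id in * by lra.
      set (E := D_set d o (proj1_sig sg) (proj1_sig tau)) in *.
      set (F := D_set d o (fun x y s => phi (proj1_sig sg x y s) (proj1_sig tau x y s) a)
                   (fun x y s => phi (proj1_sig sg x y s) (proj1_sig tau x y s) b)) in *.
      assert (Key : forall r, E r -> F (Rabs (a - b) * r)).
      { intros r [k [x [y [t [Hx [Hy [Ht Hr]]]]]]].
        exists k, x, y, t. split; [auto|split; [auto|split; [auto|]]].
        rewrite Hr.
        destruct (Hpb (proj1_sig sg x y t) (proj1_sig tau x y t)) as [_ [_ Hdd]].
        rewrite Hdd by auto. ring. }
      assert (Key2 : forall r, F r -> exists r0, E r0 /\ r = Rabs (a - b) * r0).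
      { intros r [k [x [y [t [Hx [Hy [Ht Hr]]]]]]].
        exists (/ 3 ^ k * d (proj1_sig sg x y t) (proj1_sig tau x y t)).
        split. { exists k, x, y, t. split; [auto|split; [auto|split; [auto|reflexivity]]]. }
        rewrite Hr.
        destruct (Hpb (proj1_sig sg x y t) (proj1_sig tau x y t)) as [_ [_ Hdd]].
        rewrite Hdd by auto. ring. }
      pose proof (Rabs_pos (a - b)) as Hc.
      apply Rle_antisym.
      * apply (lub_least F 0 4 F0 (fun r h => proj2 (FB r h))).
        intros r Hr. destruct (Key2 r Hr) as [r0 [Er0 ->]].
        apply Rmult_le_compat_l; auto.
        exact (lub_ub E 0 4 E0 (fun r h => proj2 (EB r h)) r0 Er0).
      * destruct (Req_dec (Rabs (a - b)) 0) as [Hz|Hnz].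
        -- rewrite Hz, Rmult_0_l.
           apply Rle_trans with 0; [lra|].
           exact (lub_ub F 0 4 F0 (fun r h => proj2 (FB r h)) 0 F0).
        -- assert (Hcp : 0 < Rabs (a - b)) by lra.
           set (L' := real (Lub_Rbar F)).
           assert (HL : real (Lub_Rbar E) <= L' / Rabs (a - b)).
           { apply (lub_least E 0 4 E0 (fun r h => proj2 (EB r h))).
             intros r Er.
             pose proof (lub_ub F 0 4 F0 (fun r h => proj2 (FB r h)) _ (Key r Er)) as Hle.
             fold L' in Hle.
             apply Rmult_le_reg_l with (Rabs (a - b)); auto.
             unfold Rdiv. rewrite (Rmult_comm L'), <- Rmult_assoc, Rinv_r by lra. lra. }
           apply Rmult_le_compat_l with (r := Rabs (a - b)) in HL; auto.
           unfold Rdiv in HL. rewrite (Rmult_comm L'), <- Rmult_assoc, Rinv_r in HL by lra.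
           lra.
  - intros sg tau sg' tau' u Hu.
    unfold D_o.
    destruct (Dset_props X d Hd o _ _ (proj2_sig sg) (proj2_sig sg')) as [E0 EB].
    destruct (Dset_props X d Hd o _ _ (proj2_sig tau) (proj2_sig tau')) as [G0 GB].
    destruct (Dset_props X d Hd o _ _ (proj2_sig (PhiDef X d Hd phi Hphi sg tau u))
                (proj2_sig (PhiDef X d Hd phi Hphi sg' tau' u))) as [F0 FB].
    simpl in *. rewrite !clamp_id in * by lra.
    eapply (lub_least _ 0 4 F0 (fun r h => proj2 (FB r h))).
    intros r [k [x [y [t [Hx [Hy [Ht Hr]]]]]]].
    rewrite Hr.
    assert (Hk : 0 < / 3 ^ k) by (apply Rinv_0_lt_compat, pow_lt; lra).
    pose proof (Hpc (proj1_sig sg x y t) (proj1_sig tau x y t)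
                    (proj1_sig sg' x y t) (proj1_sig tau' x y t) u Hu) as Hc.
    assert (L1 : / 3 ^ k * d (proj1_sig sg x y t) (proj1_sig sg' x y t)
                 <= real (Lub_Rbar (D_set d o (proj1_sig sg) (proj1_sig sg')))).
    { apply (lub_ub _ 0 4 E0 (fun r h => proj2 (EB r h))).
      exists k, x, y, t. split; [auto|split; [auto|split; [auto|reflexivity]]]. }
    assert (L2 : / 3 ^ k * d (proj1_sig tau x y t) (proj1_sig tau' x y t)
                 <= real (Lub_Rbar (D_set d o (proj1_sig tau) (proj1_sig tau')))).
    { apply (lub_ub _ 0 4 G0 (fun r h => proj2 (GB r h))).
      exists k, x, y, t. split; [auto|split; [auto|split; [auto|reflexivity]]]. }
    apply Rmult_le_compat_l with (r := / 3 ^ k) in Hc; [|lra].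
    nra.
  - intros sg tau u Hs Ht Hu.
    unfold RCBI, reversible in *. simpl.
    intros x y w Hw.
    rewrite (Hs x y w Hw), (Ht x y w Hw). reflexivity.
Qed.
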